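(* Let $\ell\ge1$. For each integer $\kappa\ge1$ and $u>1$, \[ \frac{d}{du}\widetilde{K}_{\ell}(u,\kappa)=\kappa\, \widetilde{K}_{\ell}(u,\kappa-1)+\sum_{m=0}^{\ell}\sum_{r=0}^{\ell-m}\frac{(-1)^{r}\Gamma(\kappa+1)}{m!\,(\ell-m-r)!}E_{\kappa,m}C_{r,0}\frac{d}{du}\left(\log^{\ell-m-r}u\right). \]
   Context: For integers $\ell\ge1$, $\kappa\ge0$ and $u>1$, define \[ \widetilde{K}_{\ell}(u,\kappa):=\sum_{m=0}^{\ell}\sum_{n=m}^{\kappa}\sum_{r=0}^{\ell-m}\frac{(-1)^{r}\Gamma(\kappa+1)}{m!\,(\ell-m-r)!}E_{n,m}C_{r,\kappa-n}u^{\kappa-n}\log^{\ell-m-r}u, \] where the sum over $n$ is empty if $m>\kappa$; the constants $C_{r,\kappa}$ ($r,\kappa\ge0$) are defined by $\sum_{r\ge0}C_{r,\kappa}z^r=e^{\gamma z}/\Gamma(\kappa+1-z)$ with $\gamma$ Euler's constant; and the constants $E_{n,m}$ ($n,m\ge0$) are defined by $\sum_{n\ge0}E_{n,m}z^n=\left(\int_0^z\frac{1-e^{-t}}{t}\,dt\right)^m$. *)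

(* Defs.v *)
From Stdlib Require Import Reals Arith Factorial.
From Coquelicot Require Import Coquelicot.
Open Scope R_scope.

Definition euler_gamma : R :=
  real (Lim_seq (fun N => sum_n_m (fun k => / INR k) 1 N - ln (INR N))).

Definition Gamma (x : R) : R :=
  RInt_gen (fun t => Rpower t (x - 1) * exp (- t)) (at_right 0) (Rbar_locally p_infty).

Definition taylor_coeff (f : R -> R) (n : nat) : R := Derive_n f n 0 / INR (fact n).

Definition Ccoef (r kappa : nat) : R :=
  taylor_coeff (fun z => exp (euler_gamma * z) / Gamma (INR kappa + 1 - z)) r.

Definition Ein (z : R) : R := RInt (fun t => (1 - exp (- t)) / t) 0 z.

Definition Ecoef (n m : nat) : R := taylor_coeff (fun z => Ein z ^ m) n.

(* \widetilde K_ell(u, kappa); sum_n_m f a b is empty (= 0) when b < a. *)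
Definition Ktilde (ell : nat) (u : R) (kappa : nat) : R :=
  sum_n_m (fun m =>
    sum_n_m (fun n =>
      sum_n_m (fun r =>
        (-1) ^ r * Gamma (INR kappa + 1) / (INR (fact m) * INR (fact (ell - m - r)))
        * Ecoef n m * Ccoef r (kappa - n) * u ^ (kappa - n) * ln u ^ (ell - m - r))
      0 (ell - m))
    m kappa)
  0 ell.

(* Main.v *)
Require Import Defs.
From Stdlib Require Import Reals Arith Factorial.
From Coquelicot Require Import Coquelicot.
From Stdlib Require Import Lra Lia FunctionalExtensionality.
Open Scope R_scope.


Lemma exR_cont (f : R -> R) a b : (forall z, Rmin a b <= z <= Rmax a b -> continuous f z) -> ex_RInt f a b.
Proof. intros H. exact (ex_RInt_continuous (V:=R_CompleteNormedModule) f a b H). Qed.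
Lemma RInt_correctR (f : R -> R) a b : ex_RInt f a b -> is_RInt f a b (RInt f a b).
Proof. intros H. exact (RInt_correct (V:=R_CompleteNormedModule) f a b H). Qed.

Lemma RInt_ChaslesR (f : R -> R) a b c : ex_RInt f a b -> ex_RInt f b c ->
  RInt f a b + RInt f b c = RInt f a c.
Proof. intros H1 H2. exact (RInt_Chasles (V:=R_CompleteNormedModule) f a b c H1 H2). Qed.

Lemma fp_D {Fa Fb : (R -> Prop) -> Prop} (D : R -> Prop) :
  Fa D -> Fb D -> filter_prod Fa Fb (fun ab => D (fst ab) /\ D (snd ab)).
Proof. intros Ha Hb. exists D D; auto. Qed.

Lemma is_RInt_gen_lim {Fa Fb} {FFa : ProperFilter Fa} {FFb : ProperFilter Fb}
  (D : R -> Prop) (f : R -> R) (l : R) :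
  Fa D -> Fb D -> (forall a b, D a -> D b -> ex_RInt f a b) ->
  (is_RInt_gen f Fa Fb l <->
   filterlim (fun ab => RInt f (fst ab) (snd ab)) (filter_prod Fa Fb) (locally l)).
Proof.
  intros Ha Hb Hi. split.
  - intros H P HP. specialize (H P HP). unfold filtermapi in H.
    unfold filtermap. generalize (filter_and _ _ H (fp_D D Ha Hb)).
    apply filter_imp. intros [a b] [[y [Hy1 Hy2]] [Da Db]]. simpl in *.
    unfold filtermap. simpl. rewrite (is_RInt_unique _ _ _ _ Hy1). exact Hy2.
  - intros H P HP. specialize (H P HP). unfold filtermapi. unfold filtermap in H.
    generalize (filter_and _ _ H (fp_D D Ha Hb)).
    apply filter_imp. intros [a b] [H1 [Da Db]]. simpl in *.
    exists (RInt f a b). split; [exact (RInt_correct f a b (Hi a b Da Db)) | exact H1].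
Qed.

Lemma abs_RInt_cmp (f g : R -> R) (a b : R) :
  ex_RInt f a b -> ex_RInt g a b ->
  (forall x, Rmin a b <= x <= Rmax a b -> Rabs (f x) <= g x) ->
  Rabs (RInt f a b) <= Rabs (RInt g a b).
Proof.
  intros Hf Hg Hb.
  destruct (Rle_or_lt a b) as [Hab|Hab].
  - rewrite Rmin_left in Hb by lra. rewrite Rmax_right in Hb by lra.
    eapply Rle_trans. 2: apply Rle_abs.
    apply (norm_RInt_le f g a b); auto. exact (RInt_correct f a b Hf). exact (RInt_correct g a b Hg).
  - rewrite Rmin_right in Hb by lra. rewrite Rmax_left in Hb by lra.
    rewrite <- (opp_RInt_swap f) by (apply ex_RInt_swap; auto).
    rewrite <- (opp_RInt_swap g) by (apply ex_RInt_swap; auto).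
    unfold opp; simpl. rewrite !Rabs_Ropp.
    eapply Rle_trans. 2: apply Rle_abs.
    apply (norm_RInt_le f g b a); auto; try lra.
    exact (RInt_correct f b a (ex_RInt_swap _ _ _ Hf)). exact (RInt_correct g b a (ex_RInt_swap _ _ _ Hg)).
Qed.

Lemma Rabs_minus_le (x y : R) : Rabs (x - y) <= Rabs x + Rabs y.
Proof. unfold Rminus. eapply Rle_trans. apply Rabs_triang. rewrite Rabs_Ropp. lra. Qed.

Lemma ball_R (x y e : R) : ball x e y <-> Rabs (y - x) < e.
Proof. reflexivity. Qed.

Lemma ex_RInt_gen_cmp {Fa Fb} {FFa : ProperFilter Fa} {FFb : ProperFilter Fb}
  (D : R -> Prop) (f g : R -> R) (lg : R) :
  Fa D -> Fb D ->
  (forall a b x, D a -> D b -> Rmin a b <= x <= Rmax a b -> D x) ->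
  (forall x, D x -> continuous f x) -> (forall x, D x -> continuous g x) ->
  (forall x, D x -> Rabs (f x) <= g x) ->
  is_RInt_gen g Fa Fb lg -> ex_RInt_gen f Fa Fb.
Proof.
  intros Ha Hb Hconv Hcf Hcg Hfg Hg.
  assert (Hif : forall a b, D a -> D b -> ex_RInt f a b).
  { intros a b Da Db. apply exR_cont. intros z Hz. apply Hcf. exact (Hconv a b z Da Db Hz). }
  assert (Hig : forall a b, D a -> D b -> ex_RInt g a b).
  { intros a b Da Db. apply exR_cont. intros z Hz. apply Hcg. exact (Hconv a b z Da Db Hz). }
  apply (is_RInt_gen_lim D g lg Ha Hb Hig) in Hg.
  assert (Hc : exists y, filterlim (fun ab => RInt f (fst ab) (snd ab)) (filter_prod Fa Fb) (locally y)).
  { apply filterlim_locally_cauchy. intros eps.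
    assert (He : 0 < eps / 4) by (destruct eps; simpl; lra).
    specialize (Hg (ball lg (mkposreal _ He)) (locally_ball _ _)).
    unfold filtermap in Hg.
    destruct Hg as [Qa Qb HQa HQb HQ].
    exists (fun ab => Qa (fst ab) /\ D (fst ab) /\ Qb (snd ab) /\ D (snd ab)). split.
    - exists (fun a => Qa a /\ D a) (fun b => Qb b /\ D b).
      + apply filter_and; auto.
      + apply filter_and; auto.
      + intros x y [? ?] [? ?]; simpl; tauto.
    - intros [a b] [a' b'] [Qa1 [Da1 [Qb1 Db1]]] [Qa2 [Da2 [Qb2 Db2]]]. simpl in *.
      apply ball_R.
      assert (E1 := HQ a b Qa1 Qb1). assert (E2 := HQ a' b Qa2 Qb1).
      assert (E3 := HQ a b' Qa1 Qb2).
      simpl in E1, E2, E3. rewrite ball_R in E1, E2, E3. simpl in E1, E2, E3.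
      assert (Hch : RInt f a' b' - RInt f a b = RInt f a' a + RInt f b b').
      { rewrite <- (RInt_ChaslesR f a' a b') by auto.
        rewrite <- (RInt_ChaslesR f a b b') by auto. simpl; lra. }
      assert (Hg1 : RInt g a' a = RInt g a' b - RInt g a b).
      { rewrite <- (RInt_ChaslesR g a' a b) by auto. simpl; lra. }
      assert (Hg2 : RInt g b b' = RInt g a b' - RInt g a b).
      { rewrite <- (RInt_ChaslesR g a b b') by auto. simpl; lra. }
      assert (B1 := abs_RInt_cmp f g a' a (Hif _ _ Da2 Da1) (Hig _ _ Da2 Da1)
                    (fun x Hx => Hfg x (Hconv _ _ _ Da2 Da1 Hx))).
      assert (B2 := abs_RInt_cmp f g b b' (Hif _ _ Db1 Db2) (Hig _ _ Db1 Db2)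
                    (fun x Hx => Hfg x (Hconv _ _ _ Db1 Db2 Hx))).
      rewrite Hch. rewrite Hg1 in B1. rewrite Hg2 in B2.
      destruct eps as [e ep]; simpl in *.
      eapply Rle_lt_trans. apply Rabs_triang.
      assert (Rabs (RInt g a' b - RInt g a b) < e/2).
      { replace (RInt g a' b - RInt g a b) with ((RInt g a' b - lg) - (RInt g a b - lg)) by ring.
        eapply Rle_lt_trans. apply Rabs_minus_le. lra. }
      assert (Rabs (RInt g a b' - RInt g a b) < e/2).
      { replace (RInt g a b' - RInt g a b) with ((RInt g a b' - lg) - (RInt g a b - lg)) by ring.
        eapply Rle_lt_trans. apply Rabs_minus_le. lra. }
      lra. }
  destruct Hc as [y Hy]. exists y.
  apply (is_RInt_gen_lim D f y Ha Hb Hif). exact Hy.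
Qed.



Lemma exp_le_mono x y : x <= y -> exp x <= exp y.
Proof. intros [H|H]. left; apply exp_increasing; auto. subst; lra. Qed.

Lemma exp_le_inv x y : exp x <= exp y -> x <= y.
Proof. intros H. destruct (Rle_or_lt x y) as [|H']; auto. apply exp_increasing in H'. lra. Qed.

Lemma ln_le_sub1 y : 0 < y -> ln y <= y - 1.
Proof. intros Hy. generalize (exp_ineq1_le (ln y)). rewrite exp_ln; lra. Qed.

Lemma Rpower_pos' t a : 0 < Rpower t a.
Proof. unfold Rpower; apply exp_pos. Qed.

Lemma ln_Rpower' t a : ln (Rpower t a) = a * ln t.
Proof. unfold Rpower; apply ln_exp. Qed.

Lemma lnabs_bound t e : 0 < t -> 0 < e ->
  Rabs (ln t) <= (Rpower t e + Rpower t (- e)) / e.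
Proof.
  intros Ht He.
  assert (H1 := ln_le_sub1 _ (Rpower_pos' t e)). rewrite ln_Rpower' in H1.
  assert (H2 := ln_le_sub1 _ (Rpower_pos' t (-e))). rewrite ln_Rpower' in H2.
  assert (P1 := Rpower_pos' t e). assert (P2 := Rpower_pos' t (-e)).
  apply Rmult_le_reg_r with e; auto. unfold Rdiv. rewrite Rmult_assoc, Rinv_l by lra.
  unfold Rabs; destruct (Rcase_abs (ln t)); nra.
Qed.

Lemma Rpower_le_exp_small t y z : 0 < t <= 1 -> y <= z -> Rpower t z <= Rpower t y.
Proof.
  intros [Ht1 Ht2] Hyz. unfold Rpower. apply exp_le_mono.
  assert (ln t <= 0). { rewrite <- ln_1. destruct Ht2 as [H|H]. left; apply ln_increasing; lra. subst; lra. }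
  nra.
Qed.

Lemma Rpower_le_exp_large t y z : 1 <= t -> y <= z -> Rpower t y <= Rpower t z.
Proof.
  intros Ht Hyz. unfold Rpower. apply exp_le_mono.
  assert (0 <= ln t). { rewrite <- ln_1. destruct Ht as [H|H]. left; apply ln_increasing; lra. subst; lra. }
  nra.
Qed.

Lemma Rpower_pow' t (m : nat) y : Rpower t y ^ m = Rpower t (y * INR m).
Proof.
  induction m. simpl. unfold Rpower. rewrite Rmult_0_r, Rmult_0_l, exp_0. auto.
  rewrite S_INR. simpl. rewrite IHm. unfold Rpower. rewrite <- exp_plus. f_equal. ring.
Qed.

Lemma Rpower_mul' t y z : Rpower t y * Rpower t z = Rpower t (y + z).
Proof. unfold Rpower. rewrite <- exp_plus. f_equal. ring. Qed.

Definition Bf (a : R) (m : nat) (t : R) := Rpower t a * Rabs (ln t) ^ m * exp (- t).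

Lemma Bf_nonneg a m t : 0 <= Bf a m t.
Proof.
  unfold Bf. apply Rmult_le_pos. apply Rmult_le_pos. left; apply Rpower_pos'.
  apply pow_le, Rabs_pos. left; apply exp_pos.
Qed.

Lemma Bf_small a c m : c < a -> exists K, 0 <= K /\
  forall t, 0 < t <= 1 -> Bf a m t <= K * Rpower t c.
Proof.
  intros Hca. set (e := (a - c) / (INR m + 1)).
  assert (Hm : 0 < INR m + 1) by (generalize (pos_INR m); lra).
  assert (He : 0 < e) by (unfold e; apply Rdiv_lt_0_compat; lra).
  exists ((2 / e) ^ m). split. apply pow_le. unfold Rdiv. apply Rmult_le_pos. lra. left; apply Rinv_0_lt_compat; auto.
  intros t Ht. unfold Bf.
  assert (L1 := lnabs_bound t e (proj1 Ht) He).
  assert (Q1 : Rpower t e <= Rpower t (-e)) by (apply Rpower_le_exp_small; lra).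
  assert (L2 : Rabs (ln t) <= 2 / e * Rpower t (- e)).
  { eapply Rle_trans. apply L1. unfold Rdiv.
    replace (2 * / e * Rpower t (- e)) with ((Rpower t (- e) + Rpower t (- e)) * / e) by ring.
    apply Rmult_le_compat_r. left; apply Rinv_0_lt_compat; auto. lra. }
  assert (L3 : Rabs (ln t) ^ m <= (2 / e) ^ m * Rpower t (- e * INR m)).
  { rewrite <- Rpower_pow', <- Rpow_mult_distr. apply pow_incr. split; auto. apply Rabs_pos. }
  assert (E1 : exp (- t) <= 1). { rewrite <- exp_0. apply exp_le_mono. lra. }
  assert (Q2 : Rpower t a * Rpower t (- e * INR m) <= Rpower t c).
  { rewrite Rpower_mul'. apply Rpower_le_exp_small; auto.
    unfold e. apply Rle_trans with (a - (a - c) / (INR m + 1) * (INR m + 1)).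
    unfold Rdiv. rewrite Rmult_assoc, Rinv_l by lra. lra.
    assert (0 < (a - c) / (INR m + 1)) by auto. nra. }
  assert (P1 := Rpower_pos' t a). assert (P3 := exp_pos (-t)).
  assert (P4 : 0 <= Rabs (ln t) ^ m) by (apply pow_le, Rabs_pos).
  assert (P5 : 0 <= (2/e)^m). { apply pow_le. unfold Rdiv. apply Rmult_le_pos. lra. left; apply Rinv_0_lt_compat; auto. }
  assert (P6 := Rpower_pos' t (- e * INR m)).
  apply Rle_trans with (Rpower t a * ((2 / e) ^ m * Rpower t (- e * INR m)) * 1).
  apply Rmult_le_compat.
  apply Rmult_le_pos; lra. lra. apply Rmult_le_compat_l; lra. lra.
  rewrite Rmult_1_r. rewrite <- Rmult_assoc, (Rmult_comm (Rpower t a)), Rmult_assoc.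
  apply Rmult_le_compat_l; auto.
Qed.

Lemma tq_bound t q : 0 < t -> 0 < q -> Rpower t q * exp (- t / 2) <= Rpower (2 * q) q.
Proof.
  intros Ht Hq.
  assert (H1 : t * exp (- (t / (2 * q))) <= 2 * q).
  { generalize (exp_ineq1_le (t / (2 * q))). intros H.
    assert (Hp := exp_pos (t / (2*q))). rewrite exp_Ropp.
    apply Rmult_le_reg_r with (exp (t / (2 * q))); auto.
    rewrite Rmult_assoc, Rinv_l by lra.
    assert (t = (t / (2*q)) * (2 * q)) by (field; lra). nra. }
  assert (H2 : Rpower (t * exp (- (t / (2 * q)))) q <= Rpower (2 * q) q).
  { apply Rle_Rpower_l. lra. split; auto. apply Rmult_lt_0_compat; auto. apply exp_pos. }
  rewrite <- Rpower_mult_distr in H2 by (auto; apply exp_pos).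
  unfold Rpower at 2 in H2. rewrite ln_exp in H2.
  replace (q * - (t / (2 * q))) with (- t / 2) in H2 by (field; lra). auto.
Qed.

Lemma Bf_large a m : exists K, 0 <= K /\
  forall t, 1 <= t -> Bf a m t <= K * exp (- t / 2).
Proof.
  set (q := Rmax (a + INR m) 1).
  assert (Hq : 0 < q) by (unfold q; generalize (Rmax_r (a + INR m) 1); lra).
  exists (Rpower (2 * q) q). split. left; apply Rpower_pos'.
  intros t Ht. unfold Bf.
  assert (Hl : 0 <= ln t). { rewrite <- ln_1. destruct Ht as [H|H]. left; apply ln_increasing; lra. subst; lra. }
  assert (Hl2 : ln t <= t) by (generalize (ln_le_sub1 t ltac:(lra)); lra).
  assert (L3 : Rabs (ln t) ^ m <= Rpower t (1 * INR m)).
  { rewrite <- Rpower_pow'. unfold Rpower at 1. rewrite Rmult_1_l, exp_ln by lra.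
    apply pow_incr. rewrite Rabs_pos_eq; lra. }
  assert (Q2 : Rpower t a * Rpower t (1 * INR m) <= Rpower t q).
  { rewrite Rpower_mul'. apply Rpower_le_exp_large; auto. unfold q. generalize (Rmax_l (a + INR m) 1). lra. }
  assert (T := tq_bound t q ltac:(lra) Hq).
  assert (Ee : exp (- t) = exp (- t / 2) * exp (- t / 2)) by (rewrite <- exp_plus; f_equal; field).
  assert (P1 := Rpower_pos' t a). assert (P3 := exp_pos (-t/2)).
  assert (P4 : 0 <= Rabs (ln t) ^ m) by (apply pow_le, Rabs_pos).
  assert (Hx : Rpower t a * Rabs (ln t) ^ m <= Rpower t q).
  { eapply Rle_trans; [apply Rmult_le_compat_l; [lra|exact L3]| exact Q2]. }
  rewrite Ee. rewrite <- Rmult_assoc.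
  apply Rle_trans with (Rpower t q * exp (- t / 2) * exp (- t / 2)).
  apply Rmult_le_compat_r; [lra|apply Rmult_le_compat_r; lra].
  apply Rmult_le_compat_r; lra.
Qed.


Lemma contR_mult (f g : R -> R) x : continuous f x -> continuous g x -> continuous (fun y => f y * g y) x.
Proof. intros H1 H2. exact (continuous_mult (U:=R_UniformSpace) (K:=R_AbsRing) f g x H1 H2). Qed.

Lemma derR_cont (f : R -> R) x : ex_derive f x -> continuous f x.
Proof. intros H. exact (ex_derive_continuous (K:=R_AbsRing) (V:=R_NormedModule) f x H). Qed.

Lemma contR_pow (f : R -> R) (m : nat) x : continuous f x -> continuous (fun y => f y ^ m) x.
Proof.
  intros H. induction m. simpl. apply continuous_const.
  simpl. apply contR_mult; auto.
Qed.

Lemma is_derive_Rpower x y : 0 < x -> is_derive (fun t => Rpower t y) x (y * Rpower x (y - 1)).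
Proof. intros Hx. apply is_derive_Reals. apply derivable_pt_lim_power; auto. Qed.

Lemma cont_Rpower x y : 0 < x -> continuous (fun t => Rpower t y) x.
Proof. intros Hx. apply derR_cont. eexists. apply is_derive_Rpower; auto. Qed.

Lemma cont_Bf a m x : 0 < x -> continuous (Bf a m) x.
Proof.
  intros Hx. unfold Bf. apply contR_mult. apply contR_mult. apply cont_Rpower; auto.
  apply contR_pow. apply continuous_comp. apply continuous_ln; auto. apply continuous_Rabs.
  apply derR_cont. auto_derive. auto.
Qed.

Lemma is_RInt_gen_antider {Fa Fb} {FFa : Filter Fa} {FFb : Filter Fb}
  (D : R -> Prop) (F g : R -> R) la lb :
  open D ->
  filter_prod Fa Fb (fun ab => forall x, Rmin (fst ab) (snd ab) <= x <= Rmax (fst ab) (snd ab) -> D x) ->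
  (forall x, D x -> is_derive F x (g x)) -> (forall x, D x -> continuous g x) ->
  filterlim F Fa (locally la) -> filterlim F Fb (locally lb) ->
  is_RInt_gen g Fa Fb (lb - la).
Proof.
  intros HD Hreg Hder Hcont Hla Hlb.
  apply is_RInt_gen_ext with (Derive F).
  { generalize Hreg. apply filter_imp. intros [a b] H x Hx. simpl in *.
    apply is_derive_unique. apply Hder. apply H. lra. }
  apply is_RInt_gen_Derive; auto.
  - generalize Hreg. apply filter_imp. intros [a b] H x Hx. eexists. apply Hder. apply H; auto.
  - generalize Hreg. apply filter_imp. intros [a b] H x Hx.
    apply continuous_ext_loc with g.
    + apply (locally_open D); auto. intros y Hy. symmetry. apply is_derive_unique. apply Hder; auto.
    + apply Hcont. apply H; auto.
Qed.

Lemma lim_Rpower0 p : 0 < p -> filterlim (fun t => Rpower t p) (at_right 0) (locally 0).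
Proof.
  intros Hp. apply filterlim_locally. intros eps.
  exists (mkposreal (exp (ln eps / p)) (exp_pos _)). intros y Hy Hy0.
  apply ball_R. rewrite ball_R in Hy. simpl in *. rewrite Rminus_0_r in *.
  rewrite Rabs_pos_eq by (left; apply Rpower_pos').
  destruct eps as [e ep]; simpl in *.
  rewrite Rabs_pos_eq in Hy by lra.
  unfold Rpower. rewrite <- (exp_ln e) by auto. apply exp_increasing.
  assert (ln y < ln e / p). { rewrite <- (ln_exp (ln e / p)). apply ln_increasing; auto. }
  apply Rmult_lt_compat_l with (r := p) in H; auto.
  replace (p * (ln e / p)) with (ln e) in H by (field; lra). lra.
Qed.

Lemma lim_exp_half : filterlim (fun t => exp (- t / 2)) (Rbar_locally p_infty) (locally 0).
Proof.
  apply filterlim_locally. intros [e ep]. exists (- 2 * ln e). intros x Hx.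
  apply ball_R. simpl. rewrite Rminus_0_r. rewrite Rabs_pos_eq by (left; apply exp_pos).
  rewrite <- (exp_ln e) by auto. apply exp_increasing. lra.
Qed.

Lemma lim_scal0 {T} {F : (T -> Prop) -> Prop} {FF : Filter F} (f : T -> R) K :
  filterlim f F (locally 0) -> filterlim (fun t => K * f t) F (locally 0).
Proof.
  intros H. replace 0 with (K * 0) by ring.
  apply (filterlim_comp _ _ _ f (fun y => K * y) F (locally 0)); auto.
  apply (derR_cont (fun y => K * y) 0). auto_derive. auto.
Qed.

Lemma lim_at_point (f : R -> R) a : filterlim f (at_point a) (locally (f a)).
Proof. intros P HP. exact (locally_singleton _ _ HP). Qed.

Lemma Bf_ex a m : -1 < a -> ex_RInt_gen (Bf a m) (at_right 0) (Rbar_locally p_infty).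
Proof.
  intros Ha. apply ex_RInt_gen_Chasles with 1.
  - set (c := (a - 1) / 2).
    assert (Hc : c < a) by (unfold c; lra). assert (Hc1 : 0 < c + 1) by (unfold c; lra).
    destruct (Bf_small a c m Hc) as [K [HK HB]].
    apply ex_RInt_gen_cmp with (D := fun t => 0 < t <= 1) (g := fun t => K * Rpower t c)
      (lg := K / (c + 1) * Rpower 1 (c + 1) - 0).
    + exists (mkposreal 1 Rlt_0_1). intros y Hy Hy0. rewrite ball_R in Hy. simpl in Hy.
      rewrite Rminus_0_r, Rabs_pos_eq in Hy; lra.
    + unfold at_point. lra.
    + intros x y z Hx Hy Hz. split.
      * apply Rlt_le_trans with (Rmin x y); [|apply Hz]. apply Rmin_glb_lt; lra.
      * apply Rle_trans with (Rmax x y); [apply Hz|]. apply Rmax_lub; lra.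
    + intros x Hx. apply cont_Bf; lra.
    + intros x Hx. apply contR_mult. apply continuous_const. apply cont_Rpower; lra.
    + intros x Hx. rewrite Rabs_pos_eq by apply Bf_nonneg. apply HB; auto.
    + apply (is_RInt_gen_antider (fun t => 0 < t) (fun t => K / (c + 1) * Rpower t (c + 1))).
      * apply open_gt.
      * exists (fun t => 0 < t) (fun t => t = 1).
        exists (mkposreal 1 Rlt_0_1). intros; auto.
        reflexivity.
        intros x y Hx Hy z Hz. simpl in *. subst y.
        apply Rlt_le_trans with (Rmin x 1); [|apply Hz]. apply Rmin_glb_lt; lra.
      * intros x Hx. simpl.
        replace (K * Rpower x c) with (K / (c + 1) * ((c + 1) * Rpower x (c + 1 - 1))).
        2: { replace (c + 1 - 1) with c by ring. field. lra. }
        eapply is_derive_ext. 2: apply is_derive_scal, is_derive_Rpower; auto. intros t; auto.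
      * intros x Hx. apply contR_mult. apply continuous_const. apply cont_Rpower; lra.
      * apply lim_scal0. apply lim_Rpower0. lra.
      * exact (lim_at_point (fun t => K / (c+1) * Rpower t (c+1)) 1).
  - destruct (Bf_large a m) as [K [HK HB]].
    apply ex_RInt_gen_cmp with (D := fun t => 1 <= t) (g := fun t => K * exp (- t / 2))
      (lg := 0 - (- 2 * K) * exp (- 1 / 2)).
    + unfold at_point. lra.
    + exists 1. intros; lra.
    + intros x y z Hx Hy Hz.
      apply Rle_trans with (Rmin x y); [|apply Hz]. apply Rmin_glb; lra.
    + intros x Hx. apply cont_Bf; lra.
    + intros x Hx. apply derR_cont. auto_derive. auto.
    + intros x Hx. rewrite Rabs_pos_eq by apply Bf_nonneg. apply HB; auto.
    + apply (is_RInt_gen_antider (fun t => 0 < t) (fun t => - 2 * K * exp (- t / 2))).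
      * apply open_gt.
      * exists (fun t => t = 1) (fun t => 1 < t).
        reflexivity. exists 1. intros; auto.
        intros x y Hx Hy z Hz. simpl in *. subst x.
        apply Rlt_le_trans with (Rmin 1 y); [|apply Hz]. apply Rmin_glb_lt; lra.
      * intros x Hx. auto_derive. auto. unfold Rdiv. field.
      * intros x Hx. apply derR_cont. auto_derive. auto.
      * exact (lim_at_point (fun t => - 2 * K * exp (- t / 2)) 1).
      * apply lim_scal0. apply lim_exp_half.
Qed.


Definition Pf (x : R) (j : nat) (t : R) := Rpower t (x - 1) * ln t ^ j * exp (- t).
Definition Fj (j : nat) (x : R) := RInt_gen (Pf x j) (at_right 0) (Rbar_locally p_infty).

Lemma Pf_abs x j t : Rabs (Pf x j t) = Bf (x - 1) j t.
Proof.
  unfold Pf, Bf. rewrite !Rabs_mult. rewrite <- RPow_abs.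
  rewrite (Rabs_pos_eq (Rpower _ _)) by (left; apply Rpower_pos').
  rewrite (Rabs_pos_eq (exp _)) by (left; apply exp_pos). auto.
Qed.

Lemma cont_Pf x j t : 0 < t -> continuous (Pf x j) t.
Proof.
  intros Ht. unfold Pf. apply contR_mult. apply contR_mult. apply cont_Rpower; auto.
  apply contR_pow. apply continuous_ln; auto.
  apply derR_cont. auto_derive. auto.
Qed.

Lemma at_right0_pos : at_right 0 (fun t => 0 < t).
Proof. exists (mkposreal 1 Rlt_0_1). intros; auto. Qed.

Lemma pinf_pos : Rbar_locally p_infty (fun t => 0 < t).
Proof. exists 0. intros; auto. Qed.

Lemma is_RInt_gen_R (f : R -> R) :
  ex_RInt_gen f (at_right 0) (Rbar_locally p_infty) ->
  is_RInt_gen f (at_right 0) (Rbar_locally p_infty) (RInt_gen f (at_right 0) (Rbar_locally p_infty)).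
Proof. intros H. exact (RInt_gen_correct (V:=R_CompleteNormedModule) f H). Qed.

Lemma Pf_ex x j : 0 < x -> ex_RInt_gen (Pf x j) (at_right 0) (Rbar_locally p_infty).
Proof.
  intros Hx.
  apply ex_RInt_gen_cmp with (D := fun t => 0 < t) (g := Bf (x - 1) j)
    (lg := RInt_gen (Bf (x - 1) j) (at_right 0) (Rbar_locally p_infty)).
  - apply at_right0_pos.
  - apply pinf_pos.
  - intros a b z Ha Hb Hz. apply Rlt_le_trans with (Rmin a b); [|apply Hz]. apply Rmin_glb_lt; lra.
  - intros; apply cont_Pf; auto.
  - intros; apply cont_Bf; auto.
  - intros t Ht. rewrite Pf_abs. lra.
  - apply is_RInt_gen_R. apply Bf_ex. lra.
Qed.

Lemma Pf_is x j : 0 < x -> is_RInt_gen (Pf x j) (at_right 0) (Rbar_locally p_infty) (Fj j x).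
Proof. intros Hx. apply is_RInt_gen_R. apply Pf_ex; auto. Qed.

Lemma Bf_is a m : -1 < a -> is_RInt_gen (Bf a m) (at_right 0) (Rbar_locally p_infty)
  (RInt_gen (Bf a m) (at_right 0) (Rbar_locally p_infty)).
Proof. intros Ha. apply is_RInt_gen_R. apply Bf_ex; auto. Qed.

Lemma Gamma_Fj x : Gamma x = Fj 0 x.
Proof.
  unfold Gamma, Fj. f_equal. apply functional_extensionality. intros t. unfold Pf. simpl. ring.
Qed.

Lemma is_RInt_gen_minusR {Fa Fb} {FFa : Filter Fa} {FFb : Filter Fb} (f g : R -> R) lf lg :
  is_RInt_gen f Fa Fb lf -> is_RInt_gen g Fa Fb lg ->
  is_RInt_gen (fun t => f t - g t) Fa Fb (lf - lg).
Proof.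
  intros H1 H2. generalize (is_RInt_gen_minus f g lf lg H1 H2). apply is_RInt_gen_ext.
  apply filter_forall. intros; reflexivity.
Qed.

Lemma is_RInt_gen_scalR {Fa Fb} {FFa : Filter Fa} {FFb : Filter Fb} (f : R -> R) k lf :
  is_RInt_gen f Fa Fb lf -> is_RInt_gen (fun t => k * f t) Fa Fb (k * lf).
Proof.
  intros H1. generalize (is_RInt_gen_scal f k lf H1). apply is_RInt_gen_ext.
  apply filter_forall. intros; reflexivity.
Qed.

Lemma is_RInt_gen_plusR {Fa Fb} {FFa : Filter Fa} {FFb : Filter Fb} (f g : R -> R) lf lg :
  is_RInt_gen f Fa Fb lf -> is_RInt_gen g Fa Fb lg ->
  is_RInt_gen (fun t => f t + g t) Fa Fb (lf + lg).
Proof.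
  intros H1 H2. generalize (is_RInt_gen_plus f g lf lg H1 H2). apply is_RInt_gen_ext.
  apply filter_forall. intros; reflexivity.
Qed.

Lemma MVT_R (f df : R -> R) a b : (forall x, is_derive f x (df x)) ->
  exists c, Rmin a b <= c <= Rmax a b /\ f b - f a = df c * (b - a).
Proof.
  intros H. apply MVT_gen. intros; auto.
  intros x _. apply continuity_pt_filterlim. apply derR_cont. eexists; apply H.
Qed.

Lemma exp_rem y : Rabs (exp y - 1 - y) <= y ^ 2 * exp (Rabs y).
Proof.
  destruct (MVT_R (fun s => exp s - s) (fun s => exp s - 1) 0 y) as [c [Hc Ec]].
  { intros x. auto_derive; auto. ring. }
  destruct (MVT_R exp exp 0 c) as [c' [Hc' Ec']].
  { intros x. apply is_derive_exp. }
  rewrite exp_0 in Ec, Ec'. rewrite Rminus_0_r in Ec, Ec'.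
  replace (exp y - 1 - y) with ((exp c - 1) * y) by lra.
  rewrite Ec'. rewrite !Rabs_mult.
  assert (Hcy : Rabs c <= Rabs y).
  { unfold Rmin, Rmax in Hc. destruct (Rle_dec 0 y); unfold Rabs;
    destruct (Rcase_abs c); destruct (Rcase_abs y); lra. }
  assert (Hc'y : c' <= Rabs y).
  { unfold Rmin, Rmax in Hc'. destruct (Rle_dec 0 c); unfold Rabs at 1 in Hcy;
    destruct (Rcase_abs c); lra. }
  rewrite (Rabs_pos_eq (exp c')) by (left; apply exp_pos).
  assert (E := exp_le_mono _ _ Hc'y). assert (exp c' > 0) by apply exp_pos.
  assert (0 <= Rabs c) by apply Rabs_pos. assert (0 <= Rabs y) by apply Rabs_pos.
  replace (y ^ 2) with (Rabs y * Rabs y) by (rewrite <- Rabs_mult; simpl; rewrite Rmult_1_r; apply Rabs_pos_eq; nra).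
  apply Rle_trans with (exp (Rabs y) * Rabs y * Rabs y).
  - apply Rmult_le_compat_r; auto. apply Rmult_le_compat; auto. lra.
  - lra.
Qed.


Lemma Pf_diff_bound x h j t : 0 < x -> Rabs h <= x / 2 -> 0 < t ->
  Rabs (Pf (x + h) j t - Pf x j t - h * Pf x (S j) t) <=
  h ^ 2 * (Bf (x - 1 + x / 2) (j + 2) t + Bf (x - 1 + - (x / 2)) (j + 2) t).
Proof.
  intros Hx Hh Ht. set (L := ln t). set (d := x / 2).
  assert (E : Pf (x + h) j t - Pf x j t - h * Pf x (S j) t = Pf x j t * (exp (h * L) - 1 - h * L)).
  { unfold Pf, Rpower. fold L. replace ((x + h - 1) * L) with ((x - 1) * L + h * L) by ring.
    rewrite exp_plus. simpl. ring. }
  rewrite E, Rabs_mult, Pf_abs.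
  assert (B1 := exp_rem (h * L)).
  assert (B2 : exp (Rabs (h * L)) <= Rpower t d + Rpower t (- d)).
  { assert (P1 := Rpower_pos' t d). assert (P2 := Rpower_pos' t (-d)).
    assert (Hd : Rabs (h * L) <= d * Rabs L).
    { rewrite Rabs_mult. apply Rmult_le_compat_r. apply Rabs_pos. auto. }
    apply exp_le_mono in Hd. eapply Rle_trans. apply Hd.
    unfold Rpower in *. fold L in P1, P2 |- *. unfold Rabs at 1. destruct (Rcase_abs L).
    - replace (d * - L) with (- d * L) by ring. lra.
    - lra. }
  assert (B3 : (h * L) ^ 2 = h ^ 2 * Rabs L ^ 2).
  { rewrite pow2_abs. ring. }
  assert (P0 := Bf_nonneg (x - 1) j t).
  eapply Rle_trans. apply Rmult_le_compat_l. apply P0. apply B1.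
  rewrite B3.
  eapply Rle_trans. apply Rmult_le_compat_l. apply P0. apply Rmult_le_compat_l.
  apply Rmult_le_pos. apply pow2_ge_0. apply pow_le, Rabs_pos. apply B2.
  right. unfold Bf. rewrite !Rpower_plus. fold L. rewrite !pow_add. fold d. ring.
Qed.

Lemma Fj_deriv j x : 0 < x -> is_derive (Fj j) x (Fj (S j) x).
Proof.
  intros Hx. apply is_derive_Reals. intros eps Heps.
  set (M := RInt_gen (Bf (x - 1 + x / 2) (j + 2)) (at_right 0) (Rbar_locally p_infty)
          + RInt_gen (Bf (x - 1 + - (x / 2)) (j + 2)) (at_right 0) (Rbar_locally p_infty)).
  assert (Hd : 0 < Rmin (x / 2) (eps / (Rabs M + 1))).
  { apply Rmin_glb_lt. lra. apply Rdiv_lt_0_compat. lra. generalize (Rabs_pos M); lra. }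
  exists (mkposreal _ Hd). intros h Hh0 Hh. simpl in Hh.
  assert (Hh1 : Rabs h <= x / 2) by (generalize (Rmin_l (x/2) (eps / (Rabs M + 1))); lra).
  assert (Hh2 : Rabs h < eps / (Rabs M + 1)) by (generalize (Rmin_r (x/2) (eps / (Rabs M + 1))); lra).
  assert (Hxh : 0 < x + h) by (unfold Rabs in Hh1; destruct (Rcase_abs h); lra).
  assert (Bnd : Rabs (Fj j (x + h) - Fj j x - h * Fj (S j) x) <= h ^ 2 * M).
  { apply (RInt_gen_norm (Fa := at_right 0) (Fb := Rbar_locally p_infty)
      (fun t => Pf (x + h) j t - Pf x j t - h * Pf x (S j) t)
      (fun t => h ^ 2 * (Bf (x - 1 + x / 2) (j + 2) t + Bf (x - 1 + - (x / 2)) (j + 2) t))).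
    - exists (fun a => 0 < a < 1) (fun b => 1 < b).
      exists (mkposreal 1 Rlt_0_1). intros y Hy Hy0. rewrite ball_R in Hy. simpl in Hy.
      rewrite Rminus_0_r, Rabs_pos_eq in Hy; lra.
      exists 1. auto.
      intros a b Ha Hb. simpl. lra.
    - exists (fun a => 0 < a < 1) (fun b => 1 < b).
      exists (mkposreal 1 Rlt_0_1). intros y Hy Hy0. rewrite ball_R in Hy. simpl in Hy.
      rewrite Rminus_0_r, Rabs_pos_eq in Hy; lra.
      exists 1. auto.
      intros a b Ha Hb z Hz. simpl in Hz. apply Pf_diff_bound; auto. lra.
    - apply is_RInt_gen_minusR. apply is_RInt_gen_minusR. apply Pf_is; auto. apply Pf_is; auto.
      apply is_RInt_gen_scalR. apply Pf_is; auto.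
    - apply is_RInt_gen_scalR. apply is_RInt_gen_plusR; apply Bf_is; lra. }
  replace ((Fj j (x + h) - Fj j x) / h - Fj (S j) x) with
    ((Fj j (x + h) - Fj j x - h * Fj (S j) x) / h) by (field; auto).
  unfold Rdiv. rewrite Rabs_mult, Rabs_Rinv by auto.
  assert (Ha : 0 < Rabs h) by (apply Rabs_pos_lt; auto).
  apply Rmult_le_compat_r with (r := / Rabs h) in Bnd. 2: left; apply Rinv_0_lt_compat; auto.
  eapply Rle_lt_trans. apply Bnd.
  replace (h ^ 2 * M * / Rabs h) with (Rabs h * M).
  2: { rewrite <- (Rabs_pos_eq (h^2)) by apply pow2_ge_0. rewrite <- RPow_abs. field. lra. }
  apply Rle_lt_trans with (Rabs h * (Rabs M + 1)).
  apply Rmult_le_compat_l. lra. generalize (Rle_abs M); lra.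
  apply Rmult_lt_compat_r with (r := Rabs M + 1) in Hh2. 2: generalize (Rabs_pos M); lra.
  unfold Rdiv in Hh2. rewrite Rmult_assoc, Rinv_l, Rmult_1_r in Hh2 by (generalize (Rabs_pos M); lra).
  auto.
Qed.


Lemma Gamma_smooth n : forall x, 0 < x -> Derive_n Gamma n x = Fj n x /\ ex_derive_n Gamma n x.
Proof.
  induction n; intros x Hx.
  - split; simpl; auto. apply Gamma_Fj.
  - assert (Hl : locally x (fun t => Fj n t = Derive_n Gamma n t)).
    { apply (locally_open (fun t => 0 < t)). apply open_gt. intros t Ht. symmetry. apply IHn; auto. auto. }
    split.
    + simpl. rewrite <- (Derive_ext_loc (Fj n)).
      apply is_derive_unique. apply Fj_deriv; auto. auto.
    + simpl. apply (ex_derive_ext_loc (Fj n)). auto. eexists. apply Fj_deriv; auto.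
Qed.

Lemma Gamma_ex_derive_n n x : 0 < x -> ex_derive_n Gamma n x.
Proof. intros Hx. apply Gamma_smooth; auto. Qed.

Lemma Gamma_cont x : 0 < x -> continuous Gamma x.
Proof.
  intros Hx. apply derR_cont. apply (Gamma_ex_derive_n 1 x Hx).
Qed.

Lemma squeeze0 {T} {F : (T -> Prop) -> Prop} {FF : Filter F} (f g : T -> R) :
  filterlim g F (locally 0) -> F (fun t => Rabs (f t) <= g t) -> filterlim f F (locally 0).
Proof.
  intros Hg Hb. apply filterlim_locally. intros eps.
  apply filterlim_locally with (eps := eps) in Hg.
  generalize (filter_and _ _ Hg Hb). apply filter_imp. intros t [H1 H2].
  apply ball_R. rewrite ball_R in H1. rewrite Rminus_0_r in *.
  assert (0 <= Rabs (f t)) by apply Rabs_pos.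
  unfold Rabs at 1 in H1. destruct (Rcase_abs (g t)); lra.
Qed.

Lemma is_RInt_gen_uniqR (f : R -> R) l1 l2 :
  is_RInt_gen f (at_right 0) (Rbar_locally p_infty) l1 ->
  is_RInt_gen f (at_right 0) (Rbar_locally p_infty) l2 -> l1 = l2.
Proof.
  intros H1 H2.
  rewrite <- (is_RInt_gen_unique (V:=R_CompleteNormedModule) f l1 H1).
  rewrite <- (is_RInt_gen_unique (V:=R_CompleteNormedModule) f l2 H2). auto.
Qed.

Lemma region_pos : filter_prod (at_right 0) (Rbar_locally p_infty)
  (fun ab => forall x, Rmin (fst ab) (snd ab) <= x <= Rmax (fst ab) (snd ab) -> 0 < x).
Proof.
  exists (fun a => 0 < a) (fun b => 0 < b). apply at_right0_pos. apply pinf_pos.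
  intros a b Ha Hb z Hz. simpl in Hz. apply Rlt_le_trans with (Rmin a b); [|apply Hz]. apply Rmin_glb_lt; lra.
Qed.

Lemma absF y x : Rabs (-1 * (Rpower y x * exp (- y))) = Rpower y x * exp (- y).
Proof.
  replace (-1 * (Rpower y x * exp (- y))) with (- (Rpower y x * exp (- y))) by ring.
  rewrite Rabs_Ropp. apply Rabs_pos_eq. left. apply Rmult_lt_0_compat. apply Rpower_pos'. apply exp_pos.
Qed.

Lemma Gamma_rec x : 0 < x -> Gamma (x + 1) = x * Gamma x.
Proof.
  intros Hx. rewrite !Gamma_Fj.
  assert (H1 : is_RInt_gen (fun t => Pf (x + 1) 0 t - x * Pf x 0 t) (at_right 0) (Rbar_locally p_infty) (Fj 0 (x + 1) - x * Fj 0 x)).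
  { apply is_RInt_gen_minusR. apply Pf_is; lra. apply is_RInt_gen_scalR. apply Pf_is; lra. }
  assert (H2 : is_RInt_gen (fun t => Pf (x + 1) 0 t - x * Pf x 0 t) (at_right 0) (Rbar_locally p_infty) (0 - 0)).
  { apply (is_RInt_gen_antider (fun t => 0 < t) (fun t => - 1 * (Rpower t x * exp (- t)))).
    - apply open_gt.
    - apply region_pos.
    - intros t Ht.
      replace (Pf (x + 1) 0 t - x * Pf x 0 t) with
        (-1 * ((x * Rpower t (x - 1)) * exp (- t) + Rpower t x * (- exp (- t)))).
      2: { unfold Pf. replace (x + 1 - 1) with x by ring. simpl. ring. }
      apply is_derive_scal. apply (Derive.is_derive_mult (fun t => Rpower t x) (fun t => exp (- t))).
      apply is_derive_Rpower; auto. auto_derive; auto. ring.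
    - intros t Ht. apply (continuous_ext (fun t => Pf (x + 1) 0 t - x * Pf x 0 t)). auto.
      apply (continuous_minus (V:=R_NormedModule)). apply cont_Pf; auto.
      apply contR_mult. apply continuous_const. apply cont_Pf; auto.
    - apply squeeze0 with (fun t => Rpower t x). apply lim_Rpower0; auto.
      exists (mkposreal 1 Rlt_0_1). intros y _ Hy. simpl.
      rewrite absF.
      assert (exp (- y) <= 1) by (rewrite <- exp_0; apply exp_le_mono; lra).
      assert (0 < Rpower y x) by apply Rpower_pos'. nra.
    - destruct (Bf_large x 0) as [K [HK HB]].
      apply squeeze0 with (fun t => K * exp (- t / 2)). apply lim_scal0, lim_exp_half.
      exists 1. intros y Hy.
      rewrite absF.
      generalize (HB y ltac:(lra)). unfold Bf. simpl. rewrite Rmult_1_r. auto. }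
  assert (E := is_RInt_gen_uniqR _ _ _ H1 H2). lra.
Qed.

Lemma lim_at_right0 (f : R -> R) : continuous f 0 -> filterlim f (at_right 0) (locally (f 0)).
Proof.
  intros H P HP. destruct (H P HP) as [eps He]. exists eps. intros y Hy _. apply He; auto.
Qed.

Lemma Gamma_1 : Gamma 1 = 1.
Proof.
  rewrite Gamma_Fj.
  assert (H1 := Pf_is 1 0 Rlt_0_1).
  assert (H2 : is_RInt_gen (Pf 1 0) (at_right 0) (Rbar_locally p_infty) (0 - (-1 * exp (- 0)))).
  { apply (is_RInt_gen_antider (fun t => 0 < t) (fun t => - 1 * exp (- t))).
    - apply open_gt.
    - apply region_pos.
    - intros t Ht. replace (Pf 1 0 t) with (exp (- t)).
      2: { unfold Pf, Rpower. replace (1 - 1) with 0 by ring. rewrite Rmult_0_l, exp_0. simpl; ring. }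
      auto_derive; auto. ring.
    - intros t Ht. apply cont_Pf; auto.
    - apply (lim_at_right0 (fun t => -1 * exp (- t))). apply derR_cont. auto_derive. auto.
    - apply squeeze0 with (fun t => exp (- t / 2)). apply lim_exp_half.
      exists 0. intros y Hy.
      replace (-1 * exp (- y)) with (- exp (- y)) by ring.
      rewrite Rabs_Ropp, Rabs_pos_eq by (left; apply exp_pos). apply exp_le_mono. lra. }
  rewrite (is_RInt_gen_uniqR _ _ _ H1 H2). rewrite Ropp_0, exp_0. ring.
Qed.

Lemma Gamma_nat k : Gamma (INR k + 1) = INR (fact k).
Proof.
  induction k. simpl. rewrite Rplus_0_l. apply Gamma_1.
  rewrite S_INR, Gamma_rec by (generalize (pos_INR k); lra). rewrite IHk.
  change (fact (S k)) with (S k * fact k)%nat. rewrite mult_INR, S_INR. auto.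
Qed.

Lemma Gamma_nat_neq0 k : Gamma (INR k + 1) <> 0.
Proof. rewrite Gamma_nat. apply not_0_INR. apply fact_neq_0. Qed.


Definition CnOn (U : R -> Prop) (n : nat) (f : R -> R) :=
  forall y, U y -> forall k, (k <= n)%nat -> ex_derive_n f k y.
Definition SmOn (U : R -> Prop) (f : R -> R) := forall n, CnOn U n f.

Lemma Derive_n_S_comm (f : R -> R) k t : Derive_n f (S k) t = Derive_n (Derive f) k t.
Proof.
  revert t. induction k; intros t. simpl. apply Derive_ext. intros; reflexivity.
  simpl. apply Derive_ext. intros s. apply IHk.
Qed.

Lemma exn_SS (f : R -> R) k y : ex_derive_n f (S (S k)) y <-> ex_derive_n (Derive f) (S k) y.
Proof.
  change (ex_derive (Derive_n f (S k)) y <-> ex_derive (Derive_n (Derive f) k) y).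
  split; intros H.
  - apply (ex_derive_ext (Derive_n f (S k))). intros t. apply Derive_n_S_comm. exact H.
  - apply (ex_derive_ext (Derive_n (Derive f) k)). intros t. symmetry. apply Derive_n_S_comm. exact H.
Qed.

Lemma CnOn_loc U n f y : open U -> U y -> CnOn U n f ->
  locally y (fun t => forall k, (k <= n)%nat -> ex_derive_n f k t).
Proof. intros HU Hy H. apply (locally_open U); auto. Qed.

Lemma CnOn_weaken U n f : CnOn U (S n) f -> CnOn U n f.
Proof. intros H y Hy k Hk. apply H; auto. Qed.

Lemma CnOn_le U n m f : (m <= n)%nat -> CnOn U n f -> CnOn U m f.
Proof. intros Hmn H y Hy k Hk. apply H; auto. lia. Qed.

Lemma CnOn_exd U n f y : CnOn U (S n) f -> U y -> ex_derive f y.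
Proof. intros H Hy. apply (H y Hy 1%nat). lia. Qed.

Lemma CnOn_Derive U n f : CnOn U (S n) f -> CnOn U n (Derive f).
Proof.
  intros H y Hy k Hk. destruct k. exact I.
  apply (proj1 (exn_SS f k y)). apply H; auto. lia.
Qed.

Lemma CnOn_ext U n f g : (forall t, f t = g t) -> CnOn U n f -> CnOn U n g.
Proof. intros E H y Hy k Hk. apply ex_derive_n_ext with f; auto. Qed.

Lemma CnOn_ext_loc U n f g : open U -> (forall t, U t -> f t = g t) -> CnOn U n f -> CnOn U n g.
Proof.
  intros HU E H y Hy k Hk. apply ex_derive_n_ext_loc with f; auto.
  apply (locally_open U); auto.
Qed.

Lemma CnOn_plus U n f g : open U -> CnOn U n f -> CnOn U n g -> CnOn U n (fun t => f t + g t).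
Proof.
  intros HU Hf Hg y Hy k Hk. apply ex_derive_n_plus.
  - generalize (CnOn_loc U n f y HU Hy Hf). apply filter_imp. intros t Ht j Hj. apply Ht. lia.
  - generalize (CnOn_loc U n g y HU Hy Hg). apply filter_imp. intros t Ht j Hj. apply Ht. lia.
Qed.

Lemma CnOn_scal U n f a : CnOn U n f -> CnOn U n (fun t => a * f t).
Proof. intros Hf y Hy k Hk. apply ex_derive_n_scal_l. apply Hf; auto. Qed.

Lemma CnOn_const U n a : CnOn U n (fun _ => a).
Proof. intros y Hy k Hk. apply ex_derive_n_const. Qed.

Lemma CnOn_mult U n : open U -> forall f g, CnOn U n f -> CnOn U n g -> CnOn U n (fun t => f t * g t).
Proof.
  intros HU. induction n; intros f g Hf Hg y Hy k Hk.
  - destruct k; [exact I| lia].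
  - destruct k as [|[|k]].
    + exact I.
    + simpl. apply ex_derive_mult. apply (CnOn_exd U n f); auto. apply (CnOn_exd U n g); auto.
    + apply (proj2 (exn_SS (fun t => f t * g t) k y)).
      apply ex_derive_n_ext_loc with (fun t => Derive f t * g t + f t * Derive g t).
      * apply (locally_open U); auto. intros t Ht. symmetry. apply Derive_mult.
        apply (CnOn_exd U n f); auto. apply (CnOn_exd U n g); auto.
      * apply (CnOn_plus U n); auto.
        -- apply IHn. apply CnOn_Derive; auto. apply CnOn_weaken; auto.
        -- apply IHn. apply CnOn_weaken; auto. apply CnOn_Derive; auto.
        -- lia.
Qed.

Lemma CnOn_pow U n f m : open U -> CnOn U n f -> CnOn U n (fun t => f t ^ m).
Proof.
  intros HU Hf. induction m.
  - apply (CnOn_ext U n (fun _ => 1)). intros; reflexivity. apply CnOn_const.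
  - apply (CnOn_ext U n (fun t => f t * f t ^ m)). intros; reflexivity. apply CnOn_mult; auto.
Qed.

Lemma CnOn_inv U : open U -> forall f, (forall t, U t -> f t <> 0) ->
  forall n, CnOn U n f -> CnOn U n (fun t => / f t).
Proof.
  intros HU f Hnz. induction n; intros Hf y Hy k Hk.
  - destruct k; [exact I| lia].
  - destruct k as [|[|k]].
    + exact I.
    + simpl. eexists. apply is_derive_inv. apply Derive_correct. apply (CnOn_exd U n f); auto.
      apply Hnz; auto.
    + apply (proj2 (exn_SS (fun t => / f t) k y)).
      apply ex_derive_n_ext_loc with (fun t => (-1 * Derive f t) * (/ f t * / f t)).
      * apply (locally_open U); auto. intros t Ht. symmetry.
        assert (f t <> 0) by (apply Hnz; auto).
        rewrite (is_derive_unique _ _ _ (is_derive_inv f t (Derive f t)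
          (Derive_correct f t (CnOn_exd U n f t Hf Ht)) H)). field. auto.
      * apply (CnOn_mult U n); auto.
        -- apply CnOn_scal. apply CnOn_Derive; auto.
        -- apply CnOn_mult; auto; apply IHn; apply CnOn_weaken; auto.
        -- lia.
Qed.

Lemma Derive_n_exp n y : Derive_n exp n y = exp y.
Proof.
  revert y. induction n; intros y. reflexivity.
  simpl. rewrite (Derive_ext _ exp) by auto. apply is_derive_unique, is_derive_exp.
Qed.

Lemma ex_derive_n_exp n y : ex_derive_n exp n y.
Proof.
  destruct n. exact I. simpl. apply ex_derive_ext with exp. intros; symmetry; apply Derive_n_exp.
  eexists. apply is_derive_exp.
Qed.

Lemma CnOn_exp_scal U n a : CnOn U n (fun z => exp (a * z)).
Proof.
  intros y Hy k Hk. apply ex_derive_n_comp_scal. apply filter_forall. intros; apply ex_derive_n_exp.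
Qed.

Lemma CnOn_affine V n q c : open V -> CnOn V n q -> CnOn (fun z => V (c - z)) n (fun z => q (c - z)).
Proof.
  intros HV Hq y Hy k Hk.
  apply ex_derive_n_ext with (fun t => (fun w => q (- w)) (t + - c)).
  { intros t. f_equal. ring. }
  apply (ex_derive_n_comp_trans (fun w => q (- w)) k y (- c)).
  apply (ex_derive_n_comp_opp q k (y + - c)).
  replace (- (y + - c)) with (c - y) by ring.
  generalize (CnOn_loc V n q (c - y) HV Hy Hq). apply filter_imp. intros t Ht j Hj. apply Ht. lia.
Qed.

Lemma open_affine (V : R -> Prop) c : open V -> open (fun z => V (c - z)).
Proof.
  intros HV x Hx. destruct (HV _ Hx) as [e He]. exists e. intros y Hy. apply He.
  change (Rabs ((c - y) - (c - x)) < e). change (Rabs (y - x) < e) in Hy.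
  replace ((c - y) - (c - x)) with (- (y - x)) by ring. rewrite Rabs_Ropp. auto.
Qed.


Lemma is_derive_minusR (f g : R -> R) x df dg :
  is_derive f x df -> is_derive g x dg -> is_derive (fun t => f t - g t) x (df - dg).
Proof. intros H1 H2. exact (is_derive_minus (K:=R_AbsRing) (V:=R_NormedModule) f g x df dg H1 H2). Qed.

Lemma SmOn_Derive U f : SmOn U f -> SmOn U (Derive f).
Proof. intros H n. apply CnOn_Derive. apply H. Qed.

Lemma Derive_n_linmul U g c : open U -> SmOn U g -> forall n y, U y ->
  Derive_n (fun z => (c - z) * g z) (S n) y =
  (c - y) * Derive_n g (S n) y - INR (S n) * Derive_n g n y.
Proof.
  intros HU Hg. induction n; intros y Hy.
  - change (Derive (fun z => (c - z) * g z) y = (c - y) * Derive g y - INR 1 * g y).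
    assert (Hd : is_derive (fun z => c - z) y (-1)) by (auto_derive; auto; ring).
    assert (Hgy : ex_derive g y) by (apply (CnOn_exd U 0 g); auto).
    rewrite (Derive_mult (fun z => c - z) g y) by (auto; eexists; eauto).
    assert (Hd' : Derive (fun z => c - z) y = -1) by (apply is_derive_unique; auto).
    rewrite Hd'. simpl. ring.
  - change (Derive (Derive_n (fun z => (c - z) * g z) (S n)) y =
      (c - y) * Derive (Derive_n g (S n)) y - INR (S (S n)) * Derive (Derive_n g n) y).
    etransitivity.
    { apply (Derive_ext_loc _ (fun w : R => (c - w) * Derive_n g (S n) w - INR (S n) * Derive_n g n w)).
      apply (locally_open U); auto. }
    assert (E1 : ex_derive (Derive_n g (S n)) y) by (apply (Hg (S (S n)) y Hy (S (S n))); auto).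
    assert (E0 : ex_derive (Derive_n g n) y) by (apply (Hg (S n) y Hy (S n)); auto).
    assert (Hd : is_derive (fun z => c - z) y (-1)) by (auto_derive; auto; ring).
    assert (D := is_derive_minusR _ _ y _ _
       (Derive.is_derive_mult (fun z => c - z) (Derive_n g (S n)) y _ _ Hd (Derive_correct _ _ E1))
       (is_derive_scal (Derive_n g n) y (INR (S n)) _ (Derive_correct _ _ E0))).
    assert (Ev : Derive (fun w : R => (c - w) * Derive_n g (S n) w - INR (S n) * Derive_n g n w) y
       = (-1 * Derive_n g (S n) y + (c - y) * Derive (Derive_n g (S n)) y) - INR (S n) * Derive (Derive_n g n) y).
    { apply is_derive_unique. exact D. }
    rewrite Ev. rewrite (S_INR (S n)).
    replace (Derive_n g (S n) y) with (Derive (Derive_n g n) y) by reflexivity. ring.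
Qed.

Lemma Derive_n_pow_zero U f : open U -> U 0 -> SmOn U f -> f 0 = 0 ->
  forall j m h, (j < m)%nat -> SmOn U h -> Derive_n (fun z => f z ^ m * h z) j 0 = 0.
Proof.
  intros HU H0 Hf Hf0. induction j; intros m h Hjm Hh.
  - simpl. rewrite Hf0, pow_i by lia. ring.
  - rewrite Derive_n_S_comm.
    etransitivity.
    { apply (Derive_n_ext_loc _ (fun z : R => INR m * (f z ^ (pred m) * (Derive f z * h z)) + f z ^ m * Derive h z)).
      apply (locally_open U); auto. intros t Ht.
         assert (Ef : ex_derive f t) by (apply (CnOn_exd U 0 f); auto).
         assert (Eh : ex_derive h t) by (apply (CnOn_exd U 0 h); auto).
         assert (D := Derive.is_derive_mult (fun z => f z ^ m) h t _ _
            (is_derive_pow f m t _ (Derive_correct _ _ Ef)) (Derive_correct _ _ Eh)).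
         replace (INR m * (f t ^ pred m * (Derive f t * h t)) + f t ^ m * Derive h t) with
           (INR m * Derive f t * f t ^ pred m * h t + f t ^ m * Derive h t) by ring.
         apply is_derive_unique. exact D. }
    assert (C1 : SmOn U (fun z => INR m * (f z ^ pred m * (Derive f z * h z)))).
    { intros n. apply CnOn_scal. apply CnOn_mult; auto. apply CnOn_pow; auto.
      apply CnOn_mult; auto. apply SmOn_Derive; auto. }
    assert (C2 : SmOn U (fun z => f z ^ m * Derive h z)).
    { intros n. apply CnOn_mult; auto. apply CnOn_pow; auto. apply SmOn_Derive; auto. }
    rewrite (Derive_n_plus (fun z => INR m * (f z ^ pred m * (Derive f z * h z))) (fun z => f z ^ m * Derive h z) j 0).
    2: { apply (CnOn_loc U j _ 0 HU H0 (C1 j)). }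
    2: { apply (CnOn_loc U j _ 0 HU H0 (C2 j)). }
    rewrite (Derive_n_scal_l (fun z => f z ^ pred m * (Derive f z * h z)) j (INR m) 0).
    rewrite (IHj (pred m) (fun z => Derive f z * h z)).
    rewrite (IHj m (Derive h)). ring.
    lia. apply SmOn_Derive; auto. lia.
    intros n. apply CnOn_mult; auto. apply SmOn_Derive; auto.
Qed.


Definition ae (n : nat) : R := / INR (fact n).

Lemma CV_ae : CV_radius ae = p_infty.
Proof.
  apply CV_radius_infinite_DAlembert.
  - intros n. unfold ae. apply Rinv_neq_0_compat. apply INR_fact_neq_0.
  - apply is_lim_seq_ext with (fun n => / INR (S n)).
    + intros n. unfold ae. change (fact (S n)) with (S n * fact n)%nat. rewrite mult_INR.
      assert (0 < INR (fact n)) by apply INR_fact_lt_0.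
      assert (0 < INR (S n)) by apply lt_0_INR, Nat.lt_0_succ.
      rewrite Rabs_pos_eq. field. split; lra.
      unfold Rdiv. rewrite Rinv_inv. rewrite Rinv_mult.
      apply Rmult_le_pos; [apply Rmult_le_pos|]; left; try apply Rinv_0_lt_compat; auto.
    + apply (is_lim_seq_incr_1 (fun n => / INR n) 0).
      replace (Finite 0) with (Rbar_inv p_infty) by reflexivity.
      apply is_lim_seq_inv. apply is_lim_seq_INR. discriminate.
Qed.

Definition bpsi : nat -> R := PS_decr_1 ae.
Definition psi (t : R) : R := PSeries bpsi (- t).

Lemma CV_bpsi : CV_radius bpsi = p_infty.
Proof. unfold bpsi. rewrite CV_radius_decr_1. apply CV_ae. Qed.

Lemma psi_eq t : t <> 0 -> (1 - exp (- t)) / t = psi t.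
Proof.
  intros Ht. replace (exp (- t)) with (PSeries ae (- t)) by (rewrite exp_Reals; reflexivity). unfold psi.
  rewrite (PSeries_decr_1 ae (- t)).
  2: { apply CV_radius_inside. rewrite CV_ae. exact I. }
  unfold ae at 1. simpl. rewrite Rinv_1. fold bpsi. field. auto.
Qed.

Lemma psi_smooth n y : ex_derive_n psi n y.
Proof.
  unfold psi. apply (ex_derive_n_comp_opp (PSeries bpsi) n y).
  apply filter_forall. intros t k Hk. apply ex_derive_n_PSeries. rewrite CV_bpsi. exact I.
Qed.

Lemma psi_cont y : continuous psi y.
Proof. apply derR_cont. apply (psi_smooth 1 y). Qed.

Lemma Ein_psi : Ein = fun z => RInt psi 0 z.
Proof.
  apply functional_extensionality. intros z. unfold Ein. apply RInt_ext.
  intros x Hx. apply psi_eq. intros E; subst x.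
  unfold Rmin, Rmax in Hx. destruct (Rle_dec 0 z); lra.
Qed.

Lemma Ein_deriv y : is_derive Ein y (psi y).
Proof.
  rewrite Ein_psi. apply (is_derive_RInt (V:=R_NormedModule) psi (fun z => RInt psi 0 z) 0 y).
  - apply filter_forall. intros b. apply RInt_correctR. apply exR_cont. intros; apply psi_cont.
  - apply psi_cont.
Qed.

Lemma Ein_smooth n y : ex_derive_n Ein n y.
Proof.
  destruct n as [|[|n]].
  - exact I.
  - eexists. apply Ein_deriv.
  - apply (proj2 (exn_SS Ein n y)).
    apply (ex_derive_n_ext psi). intros t. symmetry. apply is_derive_unique, Ein_deriv.
    apply psi_smooth.
Qed.

Lemma Ein_0 : Ein 0 = 0.
Proof. unfold Ein. exact (RInt_point (V:=R_CompleteNormedModule) 0 _). Qed.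

Lemma Ecoef_zero n m : (n < m)%nat -> Ecoef n m = 0.
Proof.
  intros Hnm. unfold Ecoef, taylor_coeff.
  rewrite (Derive_n_ext (fun z => Ein z ^ m) (fun z => Ein z ^ m * 1)) by (intros; ring).
  rewrite (Derive_n_pow_zero (fun _ => True) Ein open_true I) with (m := m); auto.
  unfold Rdiv; ring.
  intros k y _ j _. apply Ein_smooth.
  apply Ein_0.
  intros k y _ j _. apply ex_derive_n_const.
Qed.


Definition Gdom (w : R) := 0 < w /\ Gamma w <> 0.

Lemma open_Gdom : open Gdom.
Proof.
  intros w [Hw HG]. apply filter_and.
  - apply (locally_open (fun t => 0 < t)); auto. apply open_gt.
  - assert (Hc := Gamma_cont w Hw).
    specialize (Hc (ball (Gamma w) (mkposreal _ (Rabs_pos_lt _ HG))) (locally_ball _ _)).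
    unfold filtermap in Hc. generalize Hc. apply filter_imp. intros y Hy E.
    rewrite ball_R in Hy. simpl in Hy. rewrite E in Hy.
    rewrite Rminus_0_l, Rabs_Ropp in Hy. lra.
Qed.

Lemma SmOn_invGamma : SmOn Gdom (fun w => / Gamma w).
Proof.
  intros n. apply CnOn_inv. apply open_Gdom. intros t [_ H]; auto.
  intros y [Hy _] k _. apply Gamma_ex_derive_n; auto.
Qed.

Lemma Ccoef_rec k r : (1 <= k)%nat ->
  Ccoef r (k - 1) = INR k * Ccoef r k - match r with O => 0 | S r' => Ccoef r' k end.
Proof.
  intros Hk. set (c := INR k).
  set (g := fun z => exp (euler_gamma * z) / Gamma (INR k + 1 - z)).
  set (U0 := fun z => Gdom (c + 1 - z)).
  assert (HU0 : open U0) by (apply open_affine, open_Gdom).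
  assert (H00 : U0 0).
  { unfold U0, Gdom, c. rewrite Rminus_0_r. split. generalize (pos_INR k); lra. apply Gamma_nat_neq0. }
  assert (Hsm : SmOn U0 g).
  { intros n. apply (CnOn_ext U0 n (fun z => exp (euler_gamma * z) * (fun w => / Gamma w) (c + 1 - z))).
    intros z. unfold g, c. reflexivity.
    apply CnOn_mult; auto. apply CnOn_exp_scal.
    apply (CnOn_affine Gdom n (fun w => / Gamma w) (c + 1)). apply open_Gdom. apply SmOn_invGamma. }
  assert (Hloc : locally 0 (fun z => exp (euler_gamma * z) / Gamma (INR (k - 1) + 1 - z) = (c - z) * g z)).
  { exists (mkposreal 1 Rlt_0_1). intros z Hz. rewrite ball_R in Hz. simpl in Hz.
    rewrite Rminus_0_r in Hz.
    assert (Hz1 : -1 < z < 1) by (unfold Rabs in Hz; destruct (Rcase_abs z); lra).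
    assert (Hc1 : 1 <= c) by (unfold c; apply (le_INR 1); auto).
    unfold g. rewrite minus_INR by auto. fold c. simpl INR.
    replace (c - 1 + 1 - z) with (c - z) by ring.
    replace (c + 1 - z) with ((c - z) + 1) by ring.
    rewrite Gamma_rec by lra. unfold Rdiv. rewrite Rinv_mult.
    replace ((c - z) * (exp (euler_gamma * z) * (/ (c - z) * / Gamma (c - z)))) with
      (((c - z) * / (c - z)) * (exp (euler_gamma * z) * / Gamma (c - z))) by ring.
    rewrite Rinv_r by lra. ring. }
  unfold Ccoef at 1. unfold taylor_coeff.
  assert (E : Derive_n (fun z : R => exp (euler_gamma * z) / Gamma (INR (k - 1) + 1 - z)) r 0
             = Derive_n (fun z : R => (c - z) * g z) r 0) by (apply Derive_n_ext_loc; exact Hloc).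
  rewrite E.
  unfold Ccoef, taylor_coeff. fold g.
  destruct r as [|r].
  - simpl. unfold c. rewrite Rminus_0_r. field.
  - rewrite (Derive_n_linmul U0 g c HU0 Hsm r 0 H00).
    change (fact (S r)) with (S r * fact r)%nat. rewrite mult_INR.
    assert (0 < INR (fact r)) by apply INR_fact_lt_0.
    assert (0 < INR (S r)) by apply lt_0_INR, Nat.lt_0_succ.
    rewrite Rminus_0_r. field. split; lra.
Qed.


Lemma sumR_plus (u v : nat -> R) n m : sum_n_m (fun k => u k + v k) n m = sum_n_m u n m + sum_n_m v n m.
Proof. exact (sum_n_m_plus u v n m). Qed.
Lemma sumR_mult_l (a : R) (u : nat -> R) n m : sum_n_m (fun k => a * u k) n m = a * sum_n_m u n m.
Proof. exact (sum_n_m_mult_l a u n m). Qed.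
Lemma sumR_Sm (a : nat -> R) n m : (n <= S m)%nat -> sum_n_m a n (S m) = sum_n_m a n m + a (S m).
Proof. intros H. exact (sum_n_Sm a n m H). Qed.
Lemma sumR_Sn (a : nat -> R) n m : (n <= m)%nat -> sum_n_m a n m = a n + sum_n_m a (S n) m.
Proof. intros H. exact (sum_Sn_m a n m H). Qed.
Lemma sumR_zero (a : nat -> R) n m : (m < n)%nat -> sum_n_m a n m = 0.
Proof. intros H. exact (sum_n_m_zero a n m H). Qed.
Lemma sumR_S (a : nat -> R) n m : sum_n_m (fun k => a (S k)) n m = sum_n_m a (S n) (S m).
Proof. exact (sum_n_m_S a n m). Qed.
Lemma sumR_ext (a b : nat -> R) n m : (forall k, (n <= k <= m)%nat -> a k = b k) -> sum_n_m a n m = sum_n_m b n m.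
Proof. intros H. exact (sum_n_m_ext_loc a b n m H). Qed.
Lemma sumR_n (a : nat -> R) n : sum_n_m a n n = a n.
Proof. exact (sum_n_n a n). Qed.
Lemma sumR_const0 n m : sum_n_m (fun _ => 0) n m = 0.
Proof. exact (sum_n_m_const_zero (G:=R_AbelianMonoid) n m). Qed.

Lemma is_derive_sum (f : nat -> R -> R) (df : nat -> R) a b x :
  (forall i, (a <= i <= b)%nat -> is_derive (f i) x (df i)) ->
  is_derive (fun y => sum_n_m (fun i => f i y) a b) x (sum_n_m df a b).
Proof.
  induction b; intros H.
  - destruct a.
    + apply (is_derive_ext (f 0%nat)). intros t; rewrite sumR_n; auto.
      rewrite sumR_n. apply H; lia.
    + apply (is_derive_ext (fun _ => 0)). intros t. rewrite sumR_zero; auto; lia.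
      rewrite sumR_zero by lia. apply (is_derive_const (K:=R_AbsRing) (V:=R_NormedModule)).
  - destruct (le_lt_dec a (S b)) as [Hab|Hab].
    + apply (is_derive_ext (fun y => sum_n_m (fun i => f i y) a b + f (S b) y)).
      intros t. rewrite sumR_Sm; auto.
      rewrite sumR_Sm by auto.
      apply (is_derive_plus (K:=R_AbsRing) (V:=R_NormedModule)).
      apply IHb. intros i Hi; apply H; lia. apply H; lia.
    + apply (is_derive_ext (fun _ => 0)). intros t. rewrite sumR_zero; auto.
      rewrite sumR_zero by lia. apply (is_derive_const (K:=R_AbsRing) (V:=R_NormedModule)).
Qed.

Lemma is_derive_lnpow q u : 0 < u -> is_derive (fun v => ln v ^ q) u (INR q * / u * ln u ^ pred q).
Proof. intros Hu. apply is_derive_pow. apply is_derive_ln; auto. Qed.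

Lemma Dlnpow q u : 0 < u -> Derive (fun v => ln v ^ q) u = INR q * / u * ln u ^ pred q.
Proof. intros Hu. apply is_derive_unique. apply is_derive_lnpow; auto. Qed.

Lemma term_deriv X p q u : 0 < u ->
  is_derive (fun v => X * v ^ p * ln v ^ q) u
    (X * (INR p * u ^ pred p * ln u ^ q + u ^ p * Derive (fun v => ln v ^ q) u)).
Proof.
  intros Hu.
  assert (H1 : is_derive (fun v => v ^ p) u (INR p * 1 * u ^ pred p)).
  { apply (is_derive_pow (fun v => v)). apply (is_derive_id (K:=R_AbsRing)). }
  assert (H2 := Derive.is_derive_mult (fun v => X * v ^ p) (fun v => ln v ^ q) u _ _
    (is_derive_scal _ u X _ H1) (Derive_correct _ _ (ex_intro _ _ (is_derive_lnpow q u Hu)))).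
  replace (X * (INR p * u ^ pred p * ln u ^ q + u ^ p * Derive (fun v => ln v ^ q) u)) with
    (X * (INR p * 1 * u ^ pred p) * ln u ^ q + X * u ^ p * Derive (fun v => ln v ^ q) u) by ring.
  exact H2.
Qed.


Lemma inner_identity (N k : nat) (Ck Ckm1 : nat -> R) (u L G : R) :
  (1 <= k)%nat -> 0 < u ->
  (forall r, Ckm1 r = INR k * Ck r - match r with O => 0 | S r' => Ck r' end) ->
  sum_n_m (fun r => G * (-1) ^ r / INR (fact (N - r)) * Ck r *
     (INR k * u ^ (pred k) * L ^ (N - r) + u ^ k * (INR (N - r) * / u * L ^ (pred (N - r))))) 0 N
  = sum_n_m (fun r => G * (-1) ^ r / INR (fact (N - r)) * Ckm1 r * u ^ (k - 1) * L ^ (N - r)) 0 N.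
Proof.
  intros Hk Hu HC.
  set (a := fun r => G * (-1) ^ r / INR (fact (N - r))).
  set (P := fun r => a r * Ck r * (u ^ k * (INR (N - r) * / u * L ^ (pred (N - r))))).
  set (Q := fun r => a r * (match r with O => 0 | S r' => Ck r' end) * u ^ (k - 1) * L ^ (N - r)).
  set (X := fun r => a r * Ck r * INR k * u ^ (k - 1) * L ^ (N - r)).
  rewrite (sumR_ext _ (fun r => X r + P r)).
  2: { intros r _. unfold X, P, a. replace (pred k) with (k - 1)%nat by lia. ring. }
  rewrite (sumR_ext (fun r => G * (-1) ^ r / INR (fact (N - r)) * Ckm1 r * u ^ (k - 1) * L ^ (N - r))
             (fun r => X r + -1 * Q r)).
  2: { intros r _. unfold X, Q, a. rewrite HC. ring. }
  rewrite !sumR_plus. rewrite sumR_mult_l. f_equal.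
  destruct N as [|N'].
  - rewrite !sumR_n. unfold P, Q. simpl. ring.
  - rewrite sumR_Sm by lia. rewrite (sumR_Sn Q) by lia.
    rewrite <- sumR_S.
    assert (HP : P (S N') = 0). { unfold P. rewrite Nat.sub_diag. simpl. ring. }
    assert (HQ : Q 0%nat = 0). { unfold Q. simpl. ring. }
    rewrite HP, HQ. rewrite Rplus_0_r, Rplus_0_l.
    rewrite <- sumR_mult_l. apply sumR_ext. intros s Hs.
    unfold P, Q, a.
    replace (S N' - s)%nat with (S (N' - s)) by lia.
    replace (S N' - S s)%nat with (N' - s)%nat by lia.
    set (d := (N' - s)%nat).
    assert (Uk : u ^ k = u * u ^ (k - 1)) by (rewrite tech_pow_Rmult; f_equal; lia).
    rewrite Uk.
    change (fact (S d)) with (S d * fact d)%nat. rewrite mult_INR.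
    simpl pred.
    assert (0 < INR (fact d)) by apply INR_fact_lt_0.
    assert (0 < INR (S d)) by apply lt_0_INR, Nat.lt_0_succ.
    simpl pow. field. repeat split; lra.
Qed.


Theorem lemma3 (ell : nat) (hell : (1 <= ell)%nat) (kappa : nat) (hk : (1 <= kappa)%nat)
  (u : R) (hu : 1 < u) :
  is_derive (fun v => Ktilde ell v kappa) u
    (INR kappa * Ktilde ell u (kappa - 1)
     + sum_n_m (fun m =>
         sum_n_m (fun r =>
           (-1) ^ r * Gamma (INR kappa + 1) / (INR (fact m) * INR (fact (ell - m - r)))
           * Ecoef kappa m * Ccoef r 0 * Derive (fun v => ln v ^ (ell - m - r)) u)
         0 (ell - m))
       0 ell).
Proof.
  assert (Hu0 : 0 < u) by lra.
  set (DK := sum_n_m (fun m => sum_n_m (fun n => sum_n_m (fun r =>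
     (-1) ^ r * Gamma (INR kappa + 1) / (INR (fact m) * INR (fact (ell - m - r)))
     * Ecoef n m * Ccoef r (kappa - n) *
     (INR (kappa - n) * u ^ pred (kappa - n) * ln u ^ (ell - m - r)
      + u ^ (kappa - n) * Derive (fun v => ln v ^ (ell - m - r)) u)) 0 (ell - m)) m kappa) 0 ell).
  assert (HD : is_derive (fun v => Ktilde ell v kappa) u DK).
  { unfold Ktilde, DK. apply is_derive_sum. intros m _. cbv beta.
    apply is_derive_sum. intros n _. cbv beta.
    apply is_derive_sum. intros r _. cbv beta.
    apply term_deriv; auto. }
  replace (INR kappa * Ktilde ell u (kappa - 1) + _) with DK; auto.
  unfold DK, Ktilde. clear DK HD.
  rewrite <- sumR_mult_l, <- sumR_plus. apply sumR_ext. intros m Hm.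
  destruct kappa as [|k']; [lia|].
  replace (S k' - 1)%nat with k' by lia.
  destruct (le_lt_dec m (S k')) as [Hmk|Hmk].
  - rewrite sumR_Sm by lia. f_equal.
    + rewrite <- sumR_mult_l. apply sumR_ext. intros n Hn. rewrite <- sumR_mult_l.
      set (k := (S k' - n)%nat).
      assert (Hk1 : (1 <= k)%nat) by (unfold k; lia).
      set (G := Gamma (INR (S k') + 1) * Ecoef n m / INR (fact m)).
      assert (Fm : 0 < INR (fact m)) by apply INR_fact_lt_0.
      assert (HG : Gamma (INR (S k') + 1) = INR (S k') * Gamma (INR k' + 1)).
      { rewrite S_INR. apply Gamma_rec. generalize (pos_INR k'); lra. }
      rewrite (sumR_ext _ (fun r => G * (-1) ^ r / INR (fact (ell - m - r)) * Ccoef r k *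
          (INR k * u ^ (pred k) * ln u ^ (ell - m - r) +
           u ^ k * (INR (ell - m - r) * / u * ln u ^ (pred (ell - m - r)))))).
      2: { intros r _. rewrite Dlnpow by auto. unfold G.
           assert (0 < INR (fact (ell - m - r))) by apply INR_fact_lt_0. field. lra. }
      rewrite (sumR_ext (fun r => INR (S k') * _) (fun r => G * (-1) ^ r / INR (fact (ell - m - r)) *
          Ccoef r (k - 1) * u ^ (k - 1) * ln u ^ (ell - m - r))).
      2: { intros r _. unfold G. replace (k - 1)%nat with (k' - n)%nat by (unfold k; lia).
           rewrite HG.
           assert (0 < INR (fact (ell - m - r))) by apply INR_fact_lt_0. field. lra. }
      apply (inner_identity (ell - m) k (fun r => Ccoef r k) (fun r => Ccoef r (k - 1)) u (ln u) G); auto.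
      intros r. apply Ccoef_rec; auto.
    + apply sumR_ext. intros r _. rewrite Nat.sub_diag. simpl. ring.
  - rewrite sumR_zero by lia. rewrite sumR_zero by lia.
    rewrite (sumR_ext _ (fun _ => 0)). rewrite sumR_const0. ring.
    intros r _. rewrite Ecoef_zero by lia. ring.
Qed.
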